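(* Let $\mathcal{L}$ be a lattice. If there is an infinite set $L\subseteq\mathcal{L}$ such that for all $\ell,\ell'\in L$, $\ell\sqsubseteq\ell'$ implies $\ell=\ell'$, then the exponential lattice $2^{\mathcal{L}}$ is $\Theta(2^n)$.
   Context: A lattice means a partially ordered set $(\mathcal{L},\sqsubseteq)$ with least element $\bot$ in which any two elements have a least upper bound $\sqcup$; $\bigsqcup S$ denotes the least upper bound of a finite set ($\bigsqcup\emptyset=\bot$). The exponential lattice $2^{\mathcal{L}}$ has as elements subsets of $\mathcal{L}$, preordered by $\ell\sqsubseteq\ell'$ iff for every $\jmath\in\ell$ there is $\jmath'\in\ell'$ with $\jmath\sqsubseteq\jmath'$, and quotiented by the equivalence $\ell\sim\ell'$ iff $\ell\sqsubseteq\ell'$ and $\ell'\sqsubseteq\ell$ (so the order is antisymmetric). The closure set of a finite $S$ is $C(S)=\{\bigsqcup S' : S'\subseteq S\}$, $CS_{\mathcal{L}}(n)=\max\{|C(S)| : S\subseteq\mathcal{L}\text{ finite}, |S|\le n\}$. For $f,g:\mathbb{N}\to\mathbb{N}$, $f$ is $O(g)$ (resp. $\Omega(g)$) iff there exist $N_0\in\mathbb{N}$ and rational $C>0$ with $f(n)\le Cg(n)$ (resp. $\ge$) for all $n\ge N_0$; $\Theta$ means both. A lattice is $\Theta(f(n))$ iff its $CS$ is. *)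

(* Defs.v *)
From HB Require Import structures.
From mathcomp Require Import all_boot all_order ssralg ssrnum rat.
From mathcomp Require Import boolp classical_sets cardinality.
Import Order.Theory GRing.Theory Num.Theory.

Set Implicit Arguments.
Unset Strict Implicit.
Unset Printing Implicit Defensive.

(* A "lattice" in the sense of the paper: a partial order with a least
   element in which any two elements have a least upper bound, i.e. a
   MathComp [bJoinSemilatticeType]. *)

Fixpoint subseqs {A : Type} (s : seq A) : seq (seq A) :=
  match s with
  | [::] => [:: [::]]
  | x :: s' => subseqs s' ++ map (cons x) (subseqs s')
  end.

Lemma size_subseqs {A : Type} (s : seq A) : size (subseqs s) = 2 ^ size s.
Proof.
elim: s => [|x s IH] //=.
by rewrite size_cat size_map IH expnS mul2n addnn.
Qed.

Section Exponential.
Context {disp : Order.disp_t} {T : bJoinSemilatticeType disp}.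

(* The preorder of the exponential lattice 2^L on (arbitrary) subsets of L. *)
Definition exp_le (A B : set T) : Prop :=
  forall x, A x -> exists2 y, B y & (x <= y)%O.

Definition exp_equiv (A B : set T) : Prop := exp_le A B /\ exp_le B A.

(* The element of 2^L (equivalence class) represented by a subset A. *)
Definition exp_class (A : set T) : set (set T) := [set B | exp_equiv A B].

Definition exp_bot : set T := set0.
Definition exp_join (A B : set T) : set T := (A `|` B)%classic.
Definition exp_bigjoin (s : seq (set T)) : set T := foldr exp_join exp_bot s.

(* |C(S)| in 2^L, for a finite family S of elements of 2^L given by a list
   of representatives: the number of distinct elements (classes) of 2^L of
   the form \bigsqcup S' for S' a subfamily of S. *)
Definition exp_closure_card (S : seq (set T)) : nat :=
  size (undup [seq exp_class (exp_bigjoin s) | s <- subseqs S]).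

Lemma exp_closure_card_le (S : seq (set T)) :
  exp_closure_card S <= 2 ^ size S.
Proof.
by rewrite /exp_closure_card -size_subseqs -(size_map (fun s => exp_class (exp_bigjoin s))) size_undup.
Qed.

(* CS_{2^L}(n) = max { |C(S)| : |S| <= n }.  Since |C(S)| <= 2^|S| <= 2^n
   (lemma exp_closure_card_le), this maximum is the maximum of the
   attained values k in [0, 2^n]. *)
Definition CS_exp (n : nat) : nat :=
  \max_(k < (2 ^ n).+1 |
        `[< exists S : seq (set T), size S <= n /\ exp_closure_card S = k >])
    (k : nat).

End Exponential.

Definition bigO (f g : nat -> nat) : Prop :=
  exists (N0 : nat) (C : rat), (0 < C)%R /\
    forall n, N0 <= n -> ((f n)%:R <= C * (g n)%:R)%R.

Definition bigOmega (f g : nat -> nat) : Prop :=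
  exists (N0 : nat) (C : rat), (0 < C)%R /\
    forall n, N0 <= n -> ((f n)%:R >= C * (g n)%:R)%R.

Definition bigTheta (f g : nat -> nat) : Prop := bigO f g /\ bigOmega f g.

(* Main.v *)
Require Import Defs.
From HB Require Import structures.
From mathcomp Require Import all_boot all_order ssralg ssrnum rat.
From mathcomp Require Import boolp classical_sets cardinality.
From mathcomp Require Import finmap.
Import Order.Theory GRing.Theory Num.Theory.

Set Implicit Arguments.
Unset Strict Implicit.
Unset Printing Implicit Defensive.

Lemma mask_in_subseqs {A : eqType} (m : bitseq) (s : seq A) :
  mask m s \in subseqs s.
Proof.
elim: s m => [|x s IH] [|b m] /=; rewrite ?mem_seq1 // mem_cat.
- by have := IH [::] => ->.
- case: b; last by rewrite IH.
  by rewrite (mem_map (fun a b (E : x :: a = x :: b) => f_equal behead E)) IH orbT.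
Qed.

Lemma mask_inj_uniq {A : eqType} (s : seq A) (m m' : bitseq) :
  uniq s -> size m = size s -> size m' = size s -> mask m s = mask m' s -> m = m'.
Proof.
elim: s m m' => [|x s IH] [|b m] [|b' m'] //=; try by case: (m) => //; case: (m') => //.
move=> /andP[xs us] [hm] [hm'].
case: b; case: b' => /=.
- by case=> /(IH _ _ us hm hm') ->.
- move=> E; exfalso; have: x \in mask m' s by rewrite -E mem_head.
  by move/mem_mask; rewrite (negbTE xs).
- move=> E; exfalso; have: x \in mask m s by rewrite E mem_head.
  by move/mem_mask; rewrite (negbTE xs).
- by move/(IH _ _ us hm hm') ->.
Qed.

Section S.
Context {disp : Order.disp_t} {T : bJoinSemilatticeType disp}.

Lemma bigjoin_single (s : seq T) y :
  exp_bigjoin (map (fun l => [set l]%classic) s) y <-> y \in s.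
Proof.
elim: s => [|x s IH] /=; first by split.
rewrite in_cons /exp_join; split.
  by case=> [->|/IH ->]; rewrite ?eqxx ?orbT.
by case/orP=> [/eqP ->|/IH H]; [left|right].
Qed.

Lemma class_eq (A B : set T) : exp_class A = exp_class B -> exp_equiv A B.
Proof.
move=> E.
have : exp_class B B by split=> x Bx; exists x.
by rewrite -E.
Qed.

Lemma lower_witness (L : set T) (ls : seq T) :
  (forall l l', L l -> L l' -> (l <= l')%O -> l = l') ->
  uniq ls -> (forall x, x \in ls -> L x) ->
  exp_closure_card (map (fun l => [set l]%classic) ls) = 2 ^ size ls.
Proof.
move=> anti uls Lls.
apply/eqP; rewrite eqn_leq -{1}(size_map (fun l => [set l]%classic) ls) exp_closure_card_le /=.
set f := fun s : seq (set T) => exp_class (exp_bigjoin s).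
pose g := fun m : (size ls).-tuple bool => f (mask m (map (fun l => [set l]%classic) ls)).
have -> : 2 ^ size ls = size (map g (enum {: (size ls).-tuple bool})).
  by rewrite size_map -cardE card_tuple card_bool.
apply: uniq_leq_size.
  rewrite map_inj_uniq ?enum_uniq // => m m' /class_eq [E1 E2].
  apply: val_inj; apply: (mask_inj_uniq uls); rewrite ?size_tuple //.
  have sub : forall (m1 m2 : (size ls).-tuple bool),
      exp_le (exp_bigjoin (mask m1 [seq [set l]%classic | l <- ls]))
             (exp_bigjoin (mask m2 [seq [set l]%classic | l <- ls])) ->
      {subset mask m1 ls <= mask m2 ls}.
    move=> m1 m2 H x xm; rewrite -!map_mask in H.
    have := H x; move=> /(_ (proj2 (bigjoin_single _ _) xm)).
    case=> y ym2 le; have {ym2} ym2 := proj1 (bigjoin_single _ _) ym2.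
    have xl : x \in ls by apply: (mem_mask xm).
    have yl : y \in ls by apply: (mem_mask ym2).
    by rewrite (anti _ _ (Lls _ xl) (Lls _ yl) le).
  have s1 := sub _ _ E1; have s2 := sub _ _ E2.
  rewrite (subseq_uniqP uls (mask_subseq m ls)).
  rewrite [RHS](subseq_uniqP uls (mask_subseq m' ls)).
  apply: eq_filter => x; apply/idP/idP; [exact: s1|exact: s2].
move=> a /mapP [m _ ->]; rewrite mem_undup; apply/mapP.
exists (mask m [seq [set l]%classic | l <- ls]) => //.
exact: mask_in_subseqs.
Qed.
End S.

Lemma CS_exp_eq (disp : Order.disp_t) (T : bJoinSemilatticeType disp) (L : set T) :
  infinite_set L -> (forall l l', L l -> L l' -> (l <= l')%O -> l = l') ->
  forall n, @CS_exp disp T n = 2 ^ n.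
Proof.
move=> inf anti n; apply/eqP; rewrite eqn_leq; apply/andP; split.
  by apply/bigmax_leqP => i _; rewrite -ltnS.
have [B BL szB] := infinite_set_fset n inf.
pose ls := take n (B : seq T).
have uls : uniq ls by apply: take_uniq; apply: fset_uniq.
have Lls : forall x, x \in ls -> L x by move=> x /mem_take xB; apply: BL.
have szls : size ls = n by rewrite size_take_min; apply/minn_idPl.
pose i0 : 'I_(2 ^ n).+1 := Ordinal (ltnSn (2 ^ n)).
apply: (@leq_bigmax_cond _ _ (fun k : 'I_(2 ^ n).+1 => (k : nat)) i0) => /=.
apply/asboolP; exists (map (fun l => [set l]%classic) ls); split.
  by rewrite size_map szls.
by rewrite (lower_witness anti uls Lls) szls.
Qed.

Theorem mainTheorem6 (disp : Order.disp_t) (T : bJoinSemilatticeType disp) :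
  (exists L : set T, infinite_set L /\
     (forall l l', L l -> L l' -> (l <= l')%O -> l = l')) ->
  bigTheta (@CS_exp disp T) (fun n => 2 ^ n).
Proof.
case=> L [inf anti]; split; exists 0, 1%R; split => // n _;
  by rewrite (CS_exp_eq inf anti) mul1r.
Qed.
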